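(* Let $R$ be a profile of lexicographic preferences and $P=\mathrm{MPS}(R)$. For every type $i$, the type-$i$ marginal assignment $P^i$, defined by $P^i_{j,o}=\sum_{x\in\mathcal D:\,x_i=o}p_{j,x}$ for $j\in N$, $o\in D_i$, equals the output of the single-type probabilistic serial mechanism $\mathrm{PS}$ applied to the items $D_i$ and the profile $R^i=(\rhd^i_j)_{j\le n}$.
   Context: Setting: $N=\{1,\dots,n\}$ agents; $M=D_1\cup\dots\cup D_p$ items with pairwise disjoint types, $|D_i|=n$, unit supply; bundles $\mathcal D=D_1\times\dots\times D_p$, $x_i$ the type-$i$ component. Lexicographic preference: importance order $\rhd_j$ over types and strict orders $\rhd^i_j$ on each $D_i$; $x\succ_j y$ iff there is a type $i$ with $x_i\rhd^i_j y_i$ and $x_{i'}=y_{i'}$ for all $i'\rhd_j i$. MPS: items start with supply $1$; a bundle is available if all its items have positive remaining supply. Continuously in time each agent eats her $\succ_j$-most-preferred available bundle at rate $1$ (each item of it consumed at rate $1$, $p_{j,x}$ growing at rate $1$); exhausted items make all bundles containing them unavailable; run until all items are exhausted. Single-type PS on a set $D$ of $n$ items with strict orders $\rhd_j$ on $D$: items start with supply $1$; continuously in time each agent eats at rate $1$ her $\rhd_j$-most-preferred item with positive remaining supply, until time $1$; the output matrix records how much of each item each agent ate. *)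

(* Defs.v *)
From mathcomp Require Import all_boot all_order all_algebra all_fingroup.
Set Implicit Arguments. Unset Strict Implicit. Unset Printing Implicit Defensive.
Import Order.TTheory GRing.Theory Num.Theory.
Local Open Scope ring_scope.

(* Generic simultaneous eating process (phase-by-phase description of the   *)
(* continuous-time process).  Agents are 'I_n; I is the finite set of items *)
(* (each with initial supply 1); O is the set of objects agents eat (items  *)
(* for PS, bundles for MPS); [contents x] is the set of items contained in  *)
(* object x; [better j x y] means agent j strictly prefers x to y.          *)
(* In each phase every agent eats her most preferred available object at    *)
(* rate 1 (each item of it at rate 1); the phase lasts until the first item *)
(* being eaten is exhausted (or, if a horizon T is given, until time T).    *)
(* Every productive phase exhausts an item, so #|I|.+1 phases reach the end *)
(* of the process (further phases have duration 0).                         *)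
Section Eating.
Variables (R : realFieldType) (n : nat) (I O : finType)
  (contents : O -> pred I) (better : 'I_n -> rel O) (horizon : option R).

Record state := State {
  supply : {ffun I -> R};
  alloc : {ffun 'I_n -> {ffun O -> R}};
  clock : R }.

Definition available (st : state) (x : O) : bool :=
  [forall o, contents x o ==> (0 < supply st o)].

Definition top_obj (st : state) (j : 'I_n) : option O :=
  [pick x | available st x && [forall y, available st y ==> ~~ better j y x]].

Definition eats (st : state) (j : 'I_n) (o : I) : bool :=
  if top_obj st j is Some x then contents x o else false.

Definition rate (st : state) (o : I) : R := (#|[pred j | eats st j o]|)%:R.

Definition ratios (st : state) : seq R :=
  [seq supply st o / rate st o | o <- enum I & 0 < rate st o].

Definition dmin (st : state) : R :=
  if ratios st is r :: rs then foldr Order.min r rs else 0.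

Definition dur (st : state) : R :=
  if horizon is Some T then Order.min (dmin st) (T - clock st) else dmin st.

Definition step (st : state) : state :=
  State [ffun o => supply st o - dur st * rate st o]
        [ffun j => [ffun x => alloc st j x +
                     (if top_obj st j == Some x then dur st else 0)]]
        (clock st + dur st).

Definition init_state : state := State [ffun=> 1] [ffun=> [ffun=> 0]] 0.

Definition eating_outcome : {ffun 'I_n -> {ffun O -> R}} :=
  alloc (iter #|I|.+1 step init_state).

End Eating.

(* Preferences.  A strict order on a finite set 'I_k is encoded by a rank   *)
(* permutation r : {perm 'I_k}: a is preferred to b iff r a < r b.          *)
(* Types are 'I_p, D_i is identified with 'I_n, bundles are                 *)
(* {ffun 'I_p -> 'I_n} (x i = type-i component).                            *)
(*   imp j      : importance order of agent j over types                    *)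
(*   ord j i    : agent j's order on D_i                                    *)

Definition bundle (p n : nat) := {ffun 'I_p -> 'I_n}.

Definition lex_better (n p : nat) (imp : 'I_n -> {perm 'I_p})
  (ord : 'I_n -> 'I_p -> {perm 'I_n}) (j : 'I_n) (x y : bundle p n) : bool :=
  [exists i, (ord j i (x i) < ord j i (y i))%N &&
     [forall i', ((imp j i' < imp j i)%N) ==> (x i' == y i')]].

(* item (i, o) is item o of type i *)
Definition bundle_contents (p n : nat) (x : bundle p n) : pred ('I_p * 'I_n) :=
  fun io => x io.1 == io.2.

Definition MPS (R : realFieldType) (n p : nat) (imp : 'I_n -> {perm 'I_p})
  (ord : 'I_n -> 'I_p -> {perm 'I_n}) : {ffun 'I_n -> {ffun bundle p n -> R}} :=
  @eating_outcome R n ('I_p * 'I_n)%type (bundle p n)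
    (@bundle_contents p n) (lex_better imp ord) None.

Definition PS (R : realFieldType) (n : nat) (ordD : 'I_n -> {perm 'I_n})
  : {ffun 'I_n -> {ffun 'I_n -> R}} :=
  @eating_outcome R n 'I_n 'I_n (fun o => pred1 o)
    (fun j a b => (ordD j a < ordD j b)%N) (Some 1).

Definition marginal (R : realFieldType) (n p : nat)
  (P : {ffun 'I_n -> {ffun bundle p n -> R}}) (i : 'I_p) (j : 'I_n) (o : 'I_n) : R :=
  \sum_(x : bundle p n | x i == o) P j x.

(* Main.v *)
Require Import Defs.
From mathcomp Require Import all_boot all_order all_algebra all_fingroup.
From mathcomp Require Import ring lra.
Set Implicit Arguments. Unset Strict Implicit. Unset Printing Implicit Defensive.
Import Order.TTheory GRing.Theory Num.Theory.

Section Gen.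
Local Open Scope ring_scope.
Variables (R : realFieldType) (n : nat) (I O : finType)
  (contents : O -> pred I) (better : 'I_n -> rel O) (horizon : option R).

Local Notation st_t := (state R n I O).
Local Notation avail := (@available R n I O contents).
Local Notation top := (@top_obj R n I O contents better).
Local Notation eatsG := (@eats R n I O contents better).
Local Notation rateG := (@rate R n I O contents better).
Local Notation ratiosG := (@ratios R n I O contents better).
Local Notation dminG := (@dmin R n I O contents better).
Local Notation durG := (@dur R n I O contents better horizon).
Local Notation stepG := (@step R n I O contents better horizon).

Definition stepd (st : st_t) (d : R) : st_t :=
  State [ffun o => supply st o - d * rateG st o]
        [ffun j => [ffun x => alloc st j x + (if top st j == Some x then d else 0)]]
        (clock st + d).

Lemma step_stepd st : stepG st = stepd st (durG st). Proof. by []. Qed.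

Lemma supply_stepd st d o : supply (stepd st d) o = supply st o - d * rateG st o.
Proof. by rewrite ffunE. Qed.
Lemma clock_stepd st d : clock (stepd st d) = clock st + d.
Proof. by []. Qed.
Lemma alloc_stepd st d j x : alloc (stepd st d) j x =
  alloc st j x + (if top st j == Some x then d else 0).
Proof. by rewrite /= !ffunE. Qed.

Lemma stepd0 st : stepd st 0 = st.
Proof.
case: st => s a c; rewrite /stepd /=; congr State.
- by apply/ffunP=> o; rewrite ffunE mul0r subr0.
- by apply/ffunP=> j; apply/ffunP=> x; rewrite !ffunE; case: ifP=> _; rewrite addr0.
- by rewrite addr0.
Qed.

Definition Inv (st : st_t) := (forall o, 0 <= supply st o) /\
  (if horizon is Some T then clock st <= T else True).
Definition pos (st : st_t) := #|[pred o | 0 < supply st o]|.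

Lemma eats_pos st j o : eatsG st j o -> 0 < supply st o.
Proof.
rewrite /eats /top_obj; case: pickP => // x /andP[Hav _] Hc.
by move/forallP: Hav => /(_ o); rewrite Hc.
Qed.

Lemma rate_ge0 st o : 0 <= rateG st o.
Proof. by rewrite /rate ler0n. Qed.

Lemma rate_gt0 st o : 0 < rateG st o -> exists j, eatsG st j o.
Proof. by rewrite /rate ltr0n => /card_gt0P [j]; rewrite inE => H; exists j. Qed.

Lemma eats_rate st j o : eatsG st j o -> 0 < rateG st o.
Proof. by move=> H; rewrite /rate ltr0n; apply/card_gt0P; exists j; rewrite inE. Qed.

Lemma rate_gt0_pos st o : 0 < rateG st o -> 0 < supply st o.
Proof. by case/rate_gt0 => j /eats_pos. Qed.

Lemma rate_eq0 st o : ~~ (0 < rateG st o) -> rateG st o = 0.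
Proof.
move=> H; apply/eqP; rewrite eq_le rate_ge0 andbT leNgt; exact: H.
Qed.

Lemma foldr_min_le (r : R) rs x : x \in r :: rs -> foldr Order.min r rs <= x.
Proof.
elim: rs => [|a rs IH] /=; first by rewrite mem_seq1 => /eqP ->.
rewrite !inE ge_min => /or3P[Hx|/eqP->|H].
- by rewrite IH ?orbT // inE Hx.
- by rewrite lexx.
- by rewrite IH ?orbT // inE H orbT.
Qed.

Lemma foldr_min_mem (r : R) rs : foldr Order.min r rs \in r :: rs.
Proof.
elim: rs => [|a rs IH] /=; first by rewrite mem_head.
rewrite minElt; case: ifP => _; first by rewrite !inE eqxx orbT.
by move: IH; rewrite !inE => /orP[->|->]; rewrite ?orbT.
Qed.

Lemma min_subr (a b d : R) : Order.min (a - d) (b - d) = Order.min a b - d.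
Proof. by rewrite !minElt ltrD2r; case: ifP. Qed.

Lemma foldr_min_shift (r d : R) rs :
  foldr Order.min (r - d) [seq x - d | x <- rs] = foldr Order.min r rs - d.
Proof. by elim: rs => [|a rs IH] //=; rewrite IH min_subr. Qed.

Lemma dmin_le st x : x \in ratiosG st -> dminG st <= x.
Proof. rewrite /dmin; case: (ratiosG st) => [//|r rs]; exact: foldr_min_le. Qed.

Lemma dmin_mem st : ratiosG st != [::] -> dminG st \in ratiosG st.
Proof. rewrite /dmin; case: (ratiosG st) => [//|r rs] _; exact: foldr_min_mem. Qed.

Lemma ratio_mem st o : 0 < rateG st o -> supply st o / rateG st o \in ratiosG st.
Proof. by move=> H; rewrite /ratios; apply: map_f; rewrite mem_filter H mem_enum. Qed.

Lemma ratios_inv st x : x \in ratiosG st ->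
  exists o, 0 < rateG st o /\ x = supply st o / rateG st o.
Proof. by case/mapP => o; rewrite mem_filter => /andP[H _] ->; exists o. Qed.

Lemma dmin_ge0 st : (forall o, 0 <= supply st o) -> 0 <= dminG st.
Proof.
move=> Hs; case E: (ratiosG st) => [|r rs]; first by rewrite /dmin E.
have : dminG st \in ratiosG st by apply: dmin_mem; rewrite E.
by case/ratios_inv => o [Hr ->]; rewrite divr_ge0 // ltW.
Qed.

Lemma dmin_gt0 st : ratiosG st != [::] -> 0 < dminG st.
Proof.
move/dmin_mem; case/ratios_inv => o [Hr ->].
by rewrite divr_gt0 // rate_gt0_pos.
Qed.

Lemma dmin_nil st : ratiosG st = [::] -> dminG st = 0.
Proof. by rewrite /dmin => ->. Qed.

Lemma dur_le_dmin st : durG st <= dminG st.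
Proof. by rewrite /dur; case: horizon => [T|] //; rewrite ge_min lexx. Qed.

Lemma dur_ge0 st : Inv st -> 0 <= durG st.
Proof.
case=> Hs; rewrite /dur; case: horizon => [T|] Hc; last exact: dmin_ge0.
by rewrite le_min dmin_ge0 // subr_ge0.
Qed.

Lemma Inv_stepd st d : Inv st -> 0 <= d -> d <= durG st -> Inv (stepd st d).
Proof.
move=> [Hs Hc] Hd Hdd; split.
- move=> o; rewrite supply_stepd.
  case: (boolP (0 < rateG st o)) => Hr; last by rewrite rate_eq0 // mulr0 subr0.
  have : d <= supply st o / rateG st o.
    exact: le_trans Hdd (le_trans (dur_le_dmin st) (dmin_le (ratio_mem Hr))).
  rewrite ler_pdivlMr // => H; lra.
- move: Hdd; rewrite clock_stepd /dur; case: horizon Hc => [T|] // Hc.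
  rewrite le_min => /andP[_ H]; lra.
Qed.

Lemma supply_stepd_le st d o : 0 <= d -> supply (stepd st d) o <= supply st o.
Proof.
move=> Hd; rewrite supply_stepd; have := mulr_ge0 Hd (rate_ge0 st o); lra.
Qed.

Lemma pos_stepd st d : 0 <= d -> (pos (stepd st d) <= pos st)%N.
Proof.
move=> Hd; apply: subset_leq_card; apply/subsetP => o; rewrite !inE => H.
exact: lt_le_trans H (supply_stepd_le _ _ Hd).
Qed.

Lemma fixed st : durG st = 0 -> stepG st = st.
Proof. by rewrite step_stepd => ->; exact: stepd0. Qed.

Lemma iter_fixed (T : Type) (f : T -> T) x k : f x = x -> iter k f x = x.
Proof. by move=> H; elim: k => //= k ->. Qed.

Lemma dur_cases st : durG st = dminG st \/
  exists T, horizon = Some T /\ durG st = T - clock st.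
Proof.
rewrite /dur; case: horizon => [T|]; last by left.
rewrite minElt; case: ifP => _; [by left | right; by exists T].
Qed.

Lemma stab K st : Inv st -> (pos st < K)%N -> durG (iter K stepG st) = 0.
Proof.
elim: K st => [|K IH] st HI HK //; rewrite iterSr.
have Hd0 := dur_ge0 HI.
case: (eqVneq (durG st) 0) => Hz.
  by rewrite (fixed Hz) iter_fixed ?(fixed Hz).
have Hp : 0 < durG st by rewrite lt_def Hz Hd0.
have HI' : Inv (stepG st) := Inv_stepd HI Hd0 (lexx _).
case: (dur_cases st) => [Hdm|[T [Hh HT]]].
- apply: IH => //.
  have Hne : ratiosG st != [::].
    apply/negP => /eqP E; move: Hp; rewrite Hdm dmin_nil // ltxx //.
  case/ratios_inv: (dmin_mem Hne) => o [Hr Ho].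
  rewrite ltnS in HK; apply: (leq_trans _ HK); apply: proper_card; apply/properP; split.
    by apply/subsetP => x; rewrite !inE step_stepd => H;
       exact: lt_le_trans H (supply_stepd_le _ _ Hd0).
  exists o; first by rewrite inE rate_gt0_pos.
  rewrite inE step_stepd supply_stepd Hdm Ho mulfVK ?subrr ?ltxx //.
  by rewrite gt_eqF.
- have Hf : durG (stepG st) = 0.
    rewrite step_stepd HT /dur Hh clock_stepd.
    have H0 : T - (clock st + (T - clock st)) = 0 by ring.
    rewrite H0; apply/eqP; rewrite eq_le ge_min lexx orbT le_min lexx andbT.
    apply: dmin_ge0; have := HI'; rewrite step_stepd HT; by case.
  by rewrite iter_fixed ?(fixed Hf).
Qed.

Lemma step_split st d : Inv st -> 0 <= d -> d < durG st ->
  stepG (stepd st d) = stepG st.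
Proof.
move=> HI Hd Hdd.
have Hdm : d < dminG st := lt_le_trans Hdd (dur_le_dmin st).
have Hsup : forall o, (0 < supply (stepd st d) o) = (0 < supply st o).
  move=> o; rewrite supply_stepd.
  case: (boolP (0 < rateG st o)) => Hr; last by rewrite rate_eq0 // mulr0 subr0.
  have Hs := rate_gt0_pos Hr.
  have : d < supply st o / rateG st o by exact: lt_le_trans Hdm (dmin_le (ratio_mem Hr)).
  rewrite ltr_pdivlMr // Hs => H; apply/idP; lra.
have Hav : forall x, avail (stepd st d) x = avail st x.
  by move=> x; rewrite /available; apply: eq_forallb => o; rewrite Hsup.
have Htop : forall j, top (stepd st d) j = top st j.
  move=> j; rewrite /top_obj; apply: eq_pick => x /=; rewrite Hav; congr andb.
  by apply: eq_forallb => y; rewrite Hav.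
have Hrate : forall o, rateG (stepd st d) o = rateG st o.
  move=> o; rewrite /rate; congr (_%:R); apply: eq_card => j.
  by rewrite !inE /eats Htop.
have Hf : [seq o <- enum I | 0 < rateG (stepd st d) o] =
          [seq o <- enum I | 0 < rateG st o].
  by apply: eq_filter => o; rewrite Hrate.
have Hratios : ratiosG (stepd st d) = [seq x - d | x <- ratiosG st].
  rewrite /ratios Hf -map_comp; apply/eq_in_map => o; rewrite mem_filter.
  move=> /andP[Hr _] /=; rewrite Hrate supply_stepd; field.
  by rewrite gt_eqF.
have Hdmin : dminG (stepd st d) = dminG st - d.
  rewrite /dmin Hratios; case E: (ratiosG st) => [|r rs] /=.
    by move: Hdm; rewrite dmin_nil // => H; lra.
  exact: foldr_min_shift.
have Hdur : durG (stepd st d) = durG st - d.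
  rewrite /dur Hdmin; case: horizon => [T|] //.
  rewrite clock_stepd -min_subr; congr Order.min; ring.
rewrite (step_stepd (stepd st d)) (step_stepd st) Hdur.
set D := durG st.
rewrite {1}/stepd; congr State.
- by apply/ffunP => o; rewrite !ffunE Hrate; ring.
- apply/ffunP => j; apply/ffunP => x; rewrite !ffunE Htop.
  by case: (top st j == Some x); ring.
- rewrite clock_stepd; ring.
Qed.

Lemma mainG K st d : Inv st -> (pos st < K)%N -> 0 <= d -> d <= durG st ->
  iter K stepG (stepd st d) = iter K stepG st.
Proof.
have stabK : forall X, Inv X -> (pos X < K)%N -> iter K.+1 stepG X = iter K stepG X.
  by move=> X HX HXK; rewrite iterS fixed // stab.
move=> HI HK Hd; rewrite le_eqVlt => /orP[/eqP ->|Hlt].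
  by rewrite -step_stepd -iterSr stabK.
have HI' : Inv (stepd st d) := Inv_stepd HI Hd (ltW Hlt).
rewrite -(stabK (stepd st d)) //; last exact: leq_ltn_trans (pos_stepd _ Hd) HK.
by rewrite iterSr step_split // -iterSr stabK.
Qed.


Lemma top_none_rate st o : (forall j, top st j = None) -> rateG st o = 0.
Proof. by move=> H; apply: rate_eq0; apply/negP => /rate_gt0 [j]; rewrite /eats H. Qed.

Lemma top_none_ratios st : (forall j, top st j = None) -> ratiosG st = [::].
Proof.
move=> H; case E: (ratiosG st) => [//|r rs].
have : r \in ratiosG st by rewrite E mem_head.
by case/ratios_inv => o [Hr _]; rewrite top_none_rate // ltxx in Hr.
Qed.

Lemma state_ext (s1 s2 : st_t) : supply s1 = supply s2 -> alloc s1 = alloc s2 ->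
  clock s1 = clock s2 -> s1 = s2.
Proof. by case: s1 => ???; case: s2 => ??? /= -> -> ->. Qed.

End Gen.

Section Mps.
Local Open Scope ring_scope.
Variables (R : realFieldType) (n p : nat) (imp : 'I_n -> {perm 'I_p})
  (ord : 'I_n -> 'I_p -> {perm 'I_n}) (i : 'I_p) (j0 : 'I_n).

Local Notation B := (bundle p n).
Local Notation cM := (@bundle_contents p n).
Local Notation bM := (lex_better imp ord).
Local Notation SM := (state R n ('I_p * 'I_n)%type (bundle p n)).
Local Notation availM := (@available R n _ _ cM).
Local Notation topM := (@top_obj R n _ _ cM bM).
Local Notation eatsM := (@eats R n _ _ cM bM).
Local Notation rateM := (@rate R n _ _ cM bM).
Local Notation ratiosM := (@ratios R n _ _ cM bM).
Local Notation dminM := (@dmin R n _ _ cM bM).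
Local Notation durM := (@dur R n _ _ cM bM None).
Local Notation stepM := (@step R n _ _ cM bM None).

Local Notation cP := (fun o : 'I_n => pred1 o).
Local Notation bP := (fun (j : 'I_n) (a b : 'I_n) => (ord j i a < ord j i b)%N).
Local Notation SP := (state R n 'I_n 'I_n).
Local Notation availP := (@available R n _ _ cP).
Local Notation topP := (@top_obj R n _ _ cP bP).
Local Notation rateP := (@rate R n _ _ cP bP).
Local Notation ratiosP := (@ratios R n _ _ cP bP).
Local Notation dminP := (@dmin R n _ _ cP bP).
Local Notation durP := (@dur R n _ _ cP bP (Some 1)).
Local Notation stepP := (@step R n _ _ cP bP (Some 1)).
Local Notation stepdP := (@stepd R n _ _ cP bP).

Definition proj (st : SM) : SP :=
  State [ffun o => supply st (i, o)]
        [ffun j => [ffun o => \sum_(x : B | x i == o) alloc st j x]] (clock st).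

Definition InvM (st : SM) := (forall io, 0 <= supply st io) /\
  (forall i', \sum_(o : 'I_n) supply st (i', o) = n%:R * (1 - clock st)).

Lemma availM_E st x : availM st x = [forall i', 0 < supply st (i', x i')].
Proof.
apply/forallP/forallP => H.
- by move=> i'; have := H (i', x i'); rewrite /bundle_contents /= eqxx.
- case=> a b; apply/implyP; rewrite /bundle_contents /= => /eqP <-; exact: H.
Qed.

Lemma availP_E st o : availP (proj st) o = (0 < supply st (i, o)).
Proof.
apply/forallP/idP => [H|H o'].
- by have := H o; rewrite /= eqxx /= ffunE.
- by apply/implyP => /= /eqP ->; rewrite ffunE.
Qed.

Definition allpos (st : SM) := [forall i', [exists o, 0 < supply st (i', o)]].

Lemma topM_spec st j x : topM st j = Some x ->
  (forall i', 0 < supply st (i', x i')) /\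
  (forall i' o', 0 < supply st (i', o') -> ~~ (ord j i' o' < ord j i' (x i'))%N).
Proof.
rewrite /top_obj; case: pickP => // y /andP[Hav Hb] [Hyx]; subst y.
rewrite availM_E in Hav; split; first by move=> i'; exact: (forallP Hav i').
move=> i' o' Ho'; apply/negP => Hlt.
pose z : B := [ffun k => if k == i' then o' else x k].
have Hz : availM st z.
  rewrite availM_E; apply/forallP => k; rewrite ffunE; case: eqP => [->|_] //.
  exact: (forallP Hav k).
have Hzb : bM j z x.
  apply/existsP; exists i'; rewrite ffunE eqxx Hlt /=; apply/forallP => k.
  apply/implyP => Hk; rewrite ffunE; case: (k =P i') => [Ek|_] //.
  by rewrite Ek ltnn in Hk.
by move: (forallP Hb z); rewrite Hz Hzb.
Qed.

Lemma topM_some st j : allpos st -> exists x, topM st j = Some x.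
Proof.
move=> Hall.
have Hw : forall i', 0 < supply st (i', odflt j0 [pick o | 0 < supply st (i', o)]).
  move=> i'; case: pickP => [o //|H].
  by move: (forallP Hall i') => /existsP [o Ho]; rewrite H in Ho.
pose xs : B := [ffun i' => [arg min_(o < odflt j0 [pick o | 0 < supply st (i', o)]
     | 0 < supply st (i', o)) ord j i' o]].
have Hmin : forall i', 0 < supply st (i', xs i') /\
   forall o', 0 < supply st (i', o') -> (ord j i' (xs i') <= ord j i' o')%N.
  move=> i'; rewrite ffunE; case: arg_minnP; first exact: Hw.
  by move=> m Hm Hmm; split => // o' Ho'; apply: Hmm.
rewrite /top_obj; case: pickP => [y _|H]; first by exists y.
exfalso; move: (H xs); rewrite availM_E.
have -> : [forall i', 0 < supply st (i', xs i')] by apply/forallP => k; case: (Hmin k).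
rewrite /=; move/negbT/negP; apply; apply/forallP => y; apply/implyP.
rewrite availM_E => Hy; apply/negP => /existsP [k /andP[Hk _]].
case: (Hmin k) => _ /(_ (y k) (forallP Hy k)) Hle.
by move: (leq_trans Hk Hle); rewrite ltnn.
Qed.

Lemma topM_none st j : (exists i0 : 'I_p, true) -> (forall io, supply st io = 0) -> topM st j = None.
Proof.
move=> [i0 _] Hz; rewrite /top_obj; case: pickP => // y /andP[Hav _].
by move: (forallP Hav (i0, y i0)); rewrite /bundle_contents /= eqxx Hz ltxx.
Qed.

Lemma InvM_cases st : InvM st -> allpos st \/ (forall io, supply st io = 0).
Proof.
case=> Hnn Hsum; case: (boolP (allpos st)) => H; [by left|right].
move: H; rewrite negb_forall => /existsP [i1]; rewrite negb_exists => /forallP Hi1.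
have Hz1 : forall o, supply st (i1, o) = 0.
  by move=> o; apply/eqP; rewrite eq_le leNgt Hi1 /= Hnn.
have H0 : n%:R * (1 - clock st) = 0.
  by rewrite -(Hsum i1); apply: big1 => o _; exact: Hz1.
case=> i' o; move: (Hsum i'); rewrite H0 => Hs.
by apply: (psumr_eq0P _ Hs) => // o' _; exact: Hnn.
Qed.


Lemma topP_proj st j : InvM st -> topP (proj st) j = omap (fun x : B => x i) (topM st j).
Proof.
move=> HI; case: (InvM_cases HI) => [Ha|Hz].
- case: (topM_some j Ha) => x Hx; rewrite Hx /=.
  have [Hp Hm] := topM_spec Hx.
  rewrite {1}/top_obj; case: pickP => [y /andP[Hav Hb]|H].
  + congr Some; rewrite availP_E in Hav.
    have H1 := Hm i y Hav.
    have := forallP Hb (x i); rewrite availP_E Hp /= => H2.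
    apply: (@perm_inj _ (ord j i)); apply: val_inj; apply/eqP; rewrite /= eqn_leq.
    by apply/andP; split; rewrite leqNgt; [exact: H2|exact: H1].
  + exfalso; move: (H (x i)); rewrite /= availP_E Hp /=.
    move/negbT/negP; apply; apply/forallP => y; apply/implyP.
    rewrite availP_E.
    move=> Hy.
    exact: (Hm i y Hy).
- rewrite (topM_none _ (ex_intro _ i isT) Hz) /=.
  rewrite /top_obj; case: pickP => // y /andP[Hav _].
  by rewrite availP_E Hz ltxx in Hav.
Qed.

Lemma rate_proj st o : InvM st -> rateP (proj st) o = rateM st (i, o).
Proof.
move=> HI; rewrite /rate; congr (_%:R); apply: eq_card => j.
rewrite !inE /eats topP_proj //; case: (topM st j) => [x|] //=.
Qed.

Lemma supply_proj st o : supply (proj st) o = supply st (i, o).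
Proof. by rewrite ffunE. Qed.

Lemma sum_rate st i' : (forall j, exists x, topM st j = Some x) ->
  \sum_(o : 'I_n) rateM st (i', o) = n%:R.
Proof.
move=> Hall; rewrite /rate -natr_sum; congr (_%:R).
transitivity (\sum_(o : 'I_n) \sum_(j : 'I_n) (eatsM st j (i', o) : nat)).
  apply: eq_bigr => o _; rewrite -sum1_card big_mkcond /=.
  by apply: eq_bigr => j _; rewrite inE; case: eats.
rewrite exchange_big /=.
transitivity (\sum_(j : 'I_n) 1%N); last by rewrite sum1_card card_ord.
apply: eq_bigr => j _; case: (Hall j) => x Hx.
rewrite /eats Hx /bundle_contents /= (bigD1 (x i')) //= eqxx big1 // => o Ho.
by rewrite eq_sym (negbTE Ho).
Qed.


Lemma alloc_proj st j o : alloc (proj st) j o = \sum_(x : B | x i == o) alloc st j x.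
Proof. by rewrite /= !ffunE. Qed.

Lemma n_gt0 : (0 : R) < n%:R.
Proof. by rewrite ltr0n (leq_ltn_trans _ (ltn_ord j0)). Qed.

Lemma InvM_step st : InvM st -> InvM (stepM st).
Proof.
move=> HI; have [Hnn Hsum] := HI.
have HG : Inv None st by split.
have Hd0 : 0 <= durM st by apply: dur_ge0.
have HG' : Inv None (stepM st) by rewrite step_stepd; apply: Inv_stepd.
split; first by case: HG'.
move=> i'; case: (InvM_cases HI) => [Ha|Hz].
- have Hall : forall j, exists x, topM st j = Some x := fun j => topM_some j Ha.
  rewrite step_stepd clock_stepd.
  under eq_bigr do rewrite supply_stepd.
  rewrite sumrB -mulr_sumr sum_rate // Hsum; ring.
- have Htn : forall j, topM st j = None := fun j => topM_none j (ex_intro _ i isT) Hz.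
  have Hd : durM st = 0 by rewrite /dur dmin_nil // top_none_ratios.
  by rewrite fixed.
Qed.

Lemma durM_bound st : InvM st -> durM st <= durP (proj st).
Proof.
move=> HI; have Hn := n_gt0.
rewrite {2}/dur le_min; apply/andP; split.
- case: (InvM_cases HI) => [Ha|Hz].
  + case: (topM_some j0 Ha) => x Hx.
    have Hr : 0 < rateP (proj st) (x i).
      rewrite rate_proj //; apply: (@eats_rate _ _ _ _ _ _ _ j0).
      by rewrite /eats Hx /bundle_contents /= eqxx.
    have Hne : ratiosP (proj st) != [::].
      by apply/negP => /eqP E; move: (ratio_mem Hr); rewrite E.
    case/ratios_inv: (dmin_mem Hne) => o [Ho ->].
    change (dminM st <= supply (proj st) o / rateP (proj st) o).
    apply: dmin_le; rewrite supply_proj rate_proj //; apply: ratio_mem.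
    by rewrite -rate_proj.
  + have Htn : forall j, topM st j = None := fun j => topM_none j (ex_intro _ i isT) Hz.
    rewrite /dur dmin_nil; last exact: top_none_ratios.
    apply: dmin_ge0 => o; rewrite supply_proj; exact: HI.1.
- have [Hnn' Hs'] := InvM_step HI.
  have := Hs' i; rewrite step_stepd clock_stepd => Heq.
  have : 0 <= \sum_(o : 'I_n) supply (stepd cM bM st (durM st)) (i, o).
    by apply: sumr_ge0 => o _; have := Hnn' (i, o); rewrite step_stepd.
  rewrite Heq pmulr_rge0 //= => H; lra.
Qed.

Lemma proj_step st : InvM st -> proj (stepM st) = stepdP (proj st) (durM st).
Proof.
move=> HI; rewrite step_stepd; set d := durM st.
apply: state_ext.
- by apply/ffunP => o; rewrite supply_stepd !supply_proj supply_stepd rate_proj.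
- apply/ffunP => j; apply/ffunP => o; rewrite alloc_stepd !alloc_proj.
  under eq_bigr do rewrite alloc_stepd.
  rewrite big_split /= topP_proj //; congr (_ + _).
  case: (topM st j) => [y|] /=; last by rewrite big1.
  case: (eqVneq (y i) o) => Hyo.
  + rewrite (bigD1 y) /=; last by rewrite Hyo.
    rewrite eqxx big1 ?addr0; first by rewrite Hyo eqxx.
    move=> x /andP[_ Hxy]; case: eqP => // [[E]].
    by rewrite E eqxx in Hxy.
  + rewrite big1; last first.
      move=> x Hx; case: eqP => // [[E]].
      by move: Hyo; rewrite E (eqP Hx) eqxx.
    case: eqP => // [[E]]; by rewrite E eqxx in Hyo.
- by [].
Qed.

Lemma InvP_proj st : InvM st -> Inv (Some 1) (proj st).
Proof.
move=> [Hnn Hsum]; split; first by move=> o; rewrite supply_proj.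
have : 0 <= \sum_(o : 'I_n) supply st (i, o) by apply: sumr_ge0.
rewrite Hsum pmulr_rge0 ?n_gt0 //= => H; lra.
Qed.


Local Notation initM := (init_state R n ('I_p * 'I_n)%type (bundle p n)).
Local Notation initP := (init_state R n 'I_n 'I_n).

Lemma InvM_init : InvM initM.
Proof.
split; first by move=> io; rewrite ffunE ler01.
move=> i'; under eq_bigr do rewrite ffunE.
by rewrite sumr_const card_ord subr0 mulr1.
Qed.

Lemma InvM_iter k : InvM (iter k stepM initM).
Proof. by elim: k => [|k IH] /=; [exact: InvM_init | exact: InvM_step]. Qed.

Lemma proj_init : proj initM = initP.
Proof.
apply: state_ext.
- by apply/ffunP => o; rewrite supply_proj !ffunE.
- apply/ffunP => j; apply/ffunP => o; rewrite alloc_proj !ffunE.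
  by apply: big1 => x _; rewrite !ffunE.
- by [].
Qed.

Lemma pos_small (X : SP) : (pos X < n.+1)%N.
Proof. by rewrite ltnS; apply: leq_trans (max_card _) _; rewrite card_ord. Qed.

Lemma chain k : iter n.+1 stepP (proj (iter k stepM initM)) = iter n.+1 stepP initP.
Proof.
elim: k => [|k IH]; first by rewrite /= proj_init.
have HI := InvM_iter k.
rewrite [iter k.+1 _ _]iterS proj_step // mainG //.
- exact: InvP_proj.
- exact: pos_small.
- by apply: dur_ge0; split => //; case: HI.
- exact: durM_bound.
Qed.

Lemma final : stepP (proj (iter #|{: 'I_p * 'I_n}|.+1 stepM initM)) =
  proj (iter #|{: 'I_p * 'I_n}|.+1 stepM initM).
Proof.
set S := iter _ stepM initM.
have HI : InvM S := InvM_iter _.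
have Hd : durM S = 0.
  apply: stab; first by split => // io; rewrite ffunE ler01.
  by rewrite ltnS max_card.
have Htn : forall j, topM S j = None.
  move=> j; case E: (topM S j) => [x|] //; exfalso.
  have Hr : 0 < rateM S (i, x i).
    by apply: (@eats_rate _ _ _ _ _ _ _ j); rewrite /eats E /bundle_contents /= eqxx.
  have Hne : ratiosM S != [::].
    by apply/negP => /eqP E'; move: (ratio_mem Hr); rewrite E'.
  by move: (dmin_gt0 Hne); rewrite -/(durM S) Hd ltxx.
have Hz : forall io, supply S io = 0.
  case: (InvM_cases HI) => // Ha.
  by case: (topM_some j0 Ha) => x; rewrite Htn.
have HtP : forall j, topP (proj S) j = None by move=> j; rewrite topP_proj // Htn.
apply: fixed; rewrite /dur dmin_nil ?top_none_ratios //.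
have [_ Hc] := InvP_proj HI.
apply/eqP; rewrite eq_le ge_min lexx /= le_min lexx /= subr_ge0; exact: Hc.
Qed.

Lemma main_sec o j : \sum_(x : B | x i == o)
   alloc (iter #|{: 'I_p * 'I_n}|.+1 stepM initM) j x =
  alloc (iter n.+1 stepP initP) j o.
Proof. by rewrite -alloc_proj -(chain #|{: 'I_p * 'I_n}|.+1) [in RHS]iter_fixed // final. Qed.

End Mps.

Theorem claim1 (R : realFieldType) (n p : nat) (imp : 'I_n -> {perm 'I_p})
  (ord : 'I_n -> 'I_p -> {perm 'I_n}) (i : 'I_p) (j : 'I_n) (o : 'I_n) :
  marginal (MPS R imp ord) i j o = PS R (fun j' => ord j' i) j o.
Proof.
rewrite /marginal /MPS /PS /eating_outcome card_ord.
exact: (@main_sec R n p imp ord i j o j).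
Qed.
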